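(* Let $M\ge1$. If $\mathbf a\in\mathcal A_M$ and $\mathbf b\in\mathcal A_1$, then $\mathbf a\circ\mathbf b\in\mathcal A_M$.
   Context: Order and word operations. Sequences and words over $\{0,\dots,M\}$ are ordered lexicographically. Words are compared via $\mathbf c\prec\mathbf d$ iff $\mathbf c0^\infty\prec\mathbf d0^\infty$. For a word $c_1\dots c_k$: - if $c_k<M$, then $c_1\dots c_k^+=c_1\dots c_{k-1}(c_k+1)$; - if $c_k>0$, then $c_1\dots c_k^-=c_1\dots c_{k-1}(c_k-1)$; - the reflection is $\overline{c_1\dots c_k}=(M-c_1)\dots(M-c_k)$. Fundamental words. A word $a_1\dots a_m$ ($m\ge2$) over $\{0,\dots,M\}$ is fundamental if $\overline{a_1\dots a_{m-i}}\preceq a_{i+1}\dots a_m\prec a_1\dots a_{m-i}$ for all $1\le i<m$. When $M\ge2$, a one-letter word $a_1$ is fundamental if $M-a_1\le a_1<M$. $\mathcal A_M$ denotes the set of fundamental words over $\{0,\dots,M\}$, and $\mathcal A_1$ the set for $M=1$ (these all begin with $1$). The graph and labelings. For $\mathbf a\in\mathcal A_M$, let $G$ have vertices Start, $A$, $B$ and edges - $e_0$: Start$\to A$, - $e_1$: $A\to B$, - $e_2$: $B\to B$, - $e_3$: $B\to A$, - $e_4$: $A\to A$. Label them by - $\mathcal L_{\mathbf a}$: $e_0,e_3\mapsto\mathbf a^+$; $e_1\mapsto\overline{\mathbf a^+}$; $e_2\mapsto\mathbf a$; $e_4\mapsto\overline{\mathbf a}$; - $\mathcal L^*$: $e_0,e_3,e_4\mapsto1$;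 $e_1,e_2\mapsto0$. The map $\Phi_{\mathbf a}$. For a path $e_{i_1}\dots e_{i_k}$ with $i_1=0$, set $\Phi_{\mathbf a}(\mathcal L_{\mathbf a}(e_{i_1})\cdots\mathcal L_{\mathbf a}(e_{i_k}))=\mathcal L^*(e_{i_1}\dots e_{i_k})$. This gives a bijection between such block words and binary words beginning with $1$. Composition. For $\mathbf a\in\mathcal A_M$ and $\mathbf b\in\mathcal A_1$, the composition $\mathbf a\circ\mathbf b:=\Phi_{\mathbf a}^{-1}(\mathbf b)$ is the unique such block word (of length $|\mathbf a||\mathbf b|$) mapped to $\mathbf b$. *)

(* Defs.v *)
From mathcomp Require Import all_boot.
Set Implicit Arguments. Unset Strict Implicit. Unset Printing Implicit Defensive.

Definition seq_lt (u v : nat -> nat) : Prop :=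
  exists n, (forall i, i < n -> u i = v i) /\ u n < v n.

(* The infinite sequence c 0^oo attached to a finite word c. *)
Definition pad0 (c : seq nat) : nat -> nat := fun i => nth 0 c i.

(* c < d  iff  c0^oo < d0^oo ;  c <= d iff c0^oo <= d0^oo *)
Definition wlt (c d : seq nat) : Prop := seq_lt (pad0 c) (pad0 d).
Definition wle (c d : seq nat) : Prop :=
  wlt c d \/ (forall i, pad0 c i = pad0 d i).

(* c^+ : increase the last letter by one (only used when last letter < M). *)
Definition wplus (c : seq nat) : seq nat :=
  set_nth 0 c (size c).-1 (last 0 c).+1.

Definition wrefl (M : nat) (c : seq nat) : seq nat := map (fun x => M - x) c.

Definition fundamental (M : nat) (a : seq nat) : Prop :=
  all (fun x => x <= M) a /\
  ( (2 <= size a /\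
     forall i, 1 <= i < size a ->
       wle (wrefl M (take (size a - i) a)) (drop i a) /\
       wlt (drop i a) (take (size a - i) a))
  \/ (size a = 1 /\ 2 <= M /\ M - head 0 a <= head 0 a < M) ).

Inductive vertex := VStart | VA | VB.
Inductive edge := e0 | e1 | e2 | e3 | e4.

Definition esrc (e : edge) : vertex :=
  match e with e0 => VStart | e1 => VA | e2 => VB | e3 => VB | e4 => VA end.
Definition etgt (e : edge) : vertex :=
  match e with e0 => VA | e1 => VB | e2 => VB | e3 => VA | e4 => VA end.

Definition La (M : nat) (a : seq nat) (e : edge) : seq nat :=
  match e with
  | e0 | e3 => wplus a
  | e1 => wrefl M (wplus a)
  | e2 => a
  | e4 => wrefl M a
  end.

Definition Lstar (e : edge) : nat :=
  match e with e0 | e3 | e4 => 1 | e1 | e2 => 0 end.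

Fixpoint walk_from (v : vertex) (p : seq edge) : Prop :=
  match p with
  | [::] => True
  | e :: p' => esrc e = v /\ walk_from (etgt e) p'
  end.

Definition is_start_path (p : seq edge) : Prop :=
  walk_from VStart p /\ head e1 p = e0.

(* Phi_a^{-1}: from a vertex, the unique outgoing edge with L^*-label = bit. *)
Definition next_edge (v : vertex) (bit : nat) : edge :=
  match v with
  | VStart => e0
  | VA => if bit == 0 then e1 else e4
  | VB => if bit == 0 then e2 else e3
  end.

Fixpoint path_from (v : vertex) (bits : seq nat) : seq edge :=
  match bits with
  | [::] => [::]
  | x :: bs => let e := next_edge v x in e :: path_from (etgt e) bs
  end.

(* The path starting with e0 whose L^*-label is b (b must begin with 1). *)
Definition path_of (b : seq nat) : seq edge := path_from VStart b.

(* Composition a o b := Phi_a^{-1}(b) = L_a(path_of b) (concatenated blocks). *)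
Definition wcomp (M : nat) (a b : seq nat) : seq nat :=
  flatten (map (La M a) (path_of b)).

Lemma path_of_spec (b : seq nat) :
  all (fun x => x <= 1) b -> head 0 b = 1 ->
  is_start_path (path_of b) /\ map Lstar (path_of b) = b.
Proof.
case: b => [|x b] //= Hb Hx; subst x.
have H : forall bs v, v = VA \/ v = VB -> all (fun x => x <= 1) bs ->
   walk_from v (path_from v bs) /\ map Lstar (path_from v bs) = bs.
  elim=> [|y bs IH] v Hv //= /andP[Hy Hbs].
  have Hy' : y = 0 \/ y = 1 by case: y Hy => [|[|]]; auto.
  case: Hv => ->; case: Hy' => ->; simpl;
    (split; [split => //; apply IH; auto | f_equal; apply IH; auto]).
move: Hb => /andP[_ Hb].
rewrite /is_start_path /=; split; [split => //; split => //; apply H; auto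
  | f_equal; apply H; auto].
Qed.

(* Main.v *)
Require Import Defs.
From mathcomp Require Import all_boot.
From mathcomp Require Import zify.
From Stdlib Require Import Lia.
Set Implicit Arguments. Unset Strict Implicit. Unset Printing Implicit Defensive.

Fixpoint llt (x y : seq nat) : bool :=
  match x, y with
  | u :: x', v :: y' => (u < v) || ((u == v) && llt x' y')
  | _, _ => false
  end.
Definition lle x y := llt x y || (x == y).

Lemma llt_cat x y u v : size x = size y ->
  llt (x ++ u) (y ++ v) = llt x y || (x == y) && llt u v.
Proof.
elim: x y => [|c x IH] [|d y] //= [] Hs.
rewrite IH // eqseq_cons; case: (c < d) => //=; case: (c == d) => //=.
Qed.

Lemma lle_cat x y u v : size x = size y ->
  lle (x ++ u) (y ++ v) = llt x y || (x == y) && lle u v.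
Proof.
move=> Hs; rewrite /lle llt_cat // eqseq_cat //.
by case: (llt x y); case: (x == y).
Qed.

Lemma llt_irr x : llt x x = false.
Proof. by elim: x => //= c x ->; rewrite ltnn eqxx. Qed.

Lemma llt_trans x y z : llt x y -> llt y z -> llt x z.
Proof.
elim: x y z => [|c x IH] [|d y] [|e z] //=.
case/orP=> [H1|/andP[/eqP <- H1]]; case/orP=> [H2|/andP[/eqP <- H2]].
- by rewrite (ltn_trans H1 H2).
- by rewrite H1.
- by rewrite H2.
- by rewrite eqxx (IH _ _ H1 H2) orbT.
Qed.

Lemma lle_llt_trans x y z : lle x y -> llt y z -> llt x z.
Proof. by case/orP=> [H|/eqP ->] // H2; apply: llt_trans H H2. Qed.
Lemma llt_lle_trans x y z : llt x y -> lle y z -> llt x z.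
Proof. by move=> H; case/orP=> [H2|/eqP <-] //; apply: llt_trans H H2. Qed.
Lemma lltW x y : llt x y -> lle x y.
Proof. by rewrite /lle => ->. Qed.
Lemma lle_refl x : lle x x.
Proof. by rewrite /lle eqxx orbT. Qed.

Lemma llt_cat2 x y u v : size x = size y -> lle x y -> (x = y -> llt u v) ->
  llt (x ++ u) (y ++ v).
Proof.
move=> Hs; rewrite llt_cat //; case/orP=> [->//|/eqP E] H.
by rewrite E eqxx H // orbT.
Qed.
Lemma lle_cat2 x y u v : size x = size y -> lle x y -> (x = y -> lle u v) ->
  lle (x ++ u) (y ++ v).
Proof.
move=> Hs; rewrite lle_cat //; case/orP=> [->//|/eqP E] H.
by rewrite E eqxx H // orbT.
Qed.
Lemma llt_catl x y u v : size x = size y -> llt x y -> llt (x ++ u) (y ++ v).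
Proof. by move=> Hs H; rewrite llt_cat // H. Qed.

Lemma wlt_llt x y : size x = size y -> wlt x y <-> llt x y.
Proof.
rewrite /wlt /seq_lt /pad0.
elim: x y => [|c x IH] [|d y] //= => [_|[] Hs].
  by split=> // [[n [_]]]; rewrite !nth_nil.
split.
- case=> [[|n]] [Heq /= Hlt]; first by rewrite Hlt.
  have E := Heq 0 (ltn0Sn _); rewrite /= in E; rewrite E eqxx /=.
  apply/orP; right; apply/(IH _ Hs); exists n; split=> // i Hi.
  exact: (Heq i.+1).
- case/orP=> [H|/andP[/eqP E /(IH _ Hs) [n [Heq Hlt]]]].
    by exists 0; split.
  exists n.+1; split=> // [[|i]] //= Hi; exact: Heq.
Qed.

Lemma wle_lle x y : size x = size y -> wle x y <-> lle x y.
Proof.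
move=> Hs; have W := wlt_llt Hs; rewrite /wle /lle; split.
- case=> [/W ->//|H]; apply/orP; right; apply/eqP.
  by apply: (eq_from_nth (x0:=0)) => // i _; apply: H.
- by case/orP=> [/W|/eqP ->]; [left|right].
Qed.

Definition bnd M (x : seq nat) := all (fun z => z <= M) x.

Lemma bnd_take M k x : bnd M x -> bnd M (take k x).
Proof. by move/allP=> H; apply/allP=> z /mem_take; apply: H. Qed.
Lemma bnd_drop M k x : bnd M x -> bnd M (drop k x).
Proof. by move/allP=> H; apply/allP=> z /mem_drop; apply: H. Qed.
Lemma bnd_refl M x : bnd M (wrefl M x).
Proof. by apply/allP=> z /mapP [y _ ->]; apply: leq_subr. Qed.
Lemma bnd_cat M x y : bnd M (x ++ y) = bnd M x && bnd M y.
Proof. exact: all_cat. Qed.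

Lemma wreflK M x : bnd M x -> wrefl M (wrefl M x) = x.
Proof.
elim: x => //= c x IH /andP[Hc Hx]; by rewrite subKn // IH.
Qed.

Lemma size_wrefl M x : size (wrefl M x) = size x.
Proof. exact: size_map. Qed.

Lemma llt_wrefl M x y : bnd M x -> bnd M y ->
  llt (wrefl M x) (wrefl M y) = llt y x.
Proof.
elim: x y => [|c x IH] [|d y] //= /andP[Hc Hx] /andP[Hd Hy].
rewrite IH // ltn_sub2lE // eqn_sub2lE //.
by case: (d < c) => //=; rewrite eq_sym.
Qed.

Lemma lle_wrefl M x y : bnd M x -> bnd M y ->
  lle (wrefl M x) (wrefl M y) = lle y x.
Proof.
move=> Hx Hy; rewrite /lle llt_wrefl //; congr (_ || _).
apply/eqP/eqP=> [E|->//].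
by rewrite -(wreflK Hx) -(wreflK Hy) E.
Qed.

Lemma wrefl_cat M x y : wrefl M (x ++ y) = wrefl M x ++ wrefl M y.
Proof. exact: map_cat. Qed.

Lemma wplus_rcons s x : wplus (rcons s x) = rcons s x.+1.
Proof.
rewrite /wplus last_rcons size_rcons /=.
by elim: s => //= c s ->.
Qed.

Lemma llt_rcons x y u v : size x = size y ->
  llt (rcons x u) (rcons y v) = llt x y || (x == y) && (u < v).
Proof.
move=> Hs; rewrite -!cats1 llt_cat //=.
by rewrite andbF orbF.
Qed.

Lemma llt_wplus x : 0 < size x -> llt x (wplus x).
Proof.
case/lastP: x => // x l _; rewrite wplus_rcons llt_rcons // eqxx llt_irr /=.
exact: ltnSn.
Qed.

Lemma lle_wplus x y : size x = size y -> 0 < size x -> llt x y -> lle (wplus x) y.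
Proof.
case/lastP: x => // x l; case/lastP: y => [|y l']; first by rewrite size_rcons.
rewrite !size_rcons => -[Hs] _; rewrite wplus_rcons llt_rcons // => H.
rewrite /lle llt_rcons //.
case/orP: H=> [->//|/andP[/eqP E Hl]]; rewrite E eqxx /=.
rewrite eqseq_rcons eqxx /=.
by rewrite llt_irr /= orbC -leq_eqVlt.
Qed.

Lemma size_wplus x : 0 < size x -> size (wplus x) = size x.
Proof. by case/lastP: x => [//|x l]; rewrite wplus_rcons !size_rcons. Qed.

Section G.
Variables (M : nat) (a : seq nat).

Definition blk p x :=
  if p == 0 then (if x == 0 then a else wplus a)
  else wrefl M (if x == 0 then wplus a else a).

Fixpoint G p w := match w with [::] => [::] | x :: w' => blk p x :: G x w' end.

Lemma size_G p w : size (G p w) = size w.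
Proof. by elim: w p => //= x w IH p; rewrite IH. Qed.

Lemma path_G p w : bnd 1 w ->
  map (La M a) (path_from (if p == 0 then VB else VA) w) = G p w.
Proof.
elim: w p => //= x w IH p /andP[Hx Hw].
have [->|->] : x = 0 \/ x = 1 by case: x Hx => [|[|]] //= _; auto.
- by rewrite /blk; case: (p == 0) => /=; rewrite -(IH 0 Hw).
- by rewrite /blk; case: (p == 0) => /=; rewrite -(IH 1 Hw).
Qed.

Lemma wcomp_G b : bnd 1 b -> head 0 b = 1 -> wcomp M a b = flatten (G 0 b).
Proof.
case: b => [|x b] //= /andP[_ Hb] Hx; subst x.
by rewrite /wcomp /path_of /= -(path_G 1 Hb).
Qed.

Lemma G_drop q p w : q <= size w ->
  drop q (G p w) = G (if q is q'.+1 then nth 0 w q' else p) (drop q w).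
Proof.
elim: w p q => [|x w IH] p [|q] //= Hq.
rewrite IH //; by case: q Hq.
Qed.

Lemma G_take k p w : take k (G p w) = G p (take k w).
Proof. by elim: w p k => [|x w IH] p [|k] //=; rewrite IH. Qed.

Lemma drop_flatten m q (bl : seq (seq nat)) : all (fun B => size B == m) bl ->
  drop (q * m) (flatten bl) = flatten (drop q bl).
Proof.
elim: bl q => [|B bl IH] q /=; first by case: q.
case/andP=> /eqP HB Hbl; case: q => [|q]; first by rewrite mul0n drop0.
rewrite drop_cat HB mulSn ltnNge leq_addr /= -IH //; congr drop.
by rewrite addKn.
Qed.

Lemma take_flatten m q (bl : seq (seq nat)) : all (fun B => size B == m) bl ->
  take (q * m) (flatten bl) = flatten (take q bl).
Proof.
elim: bl q => [|B bl IH] q /=; first by case: q.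
case/andP=> /eqP HB Hbl; case: q => [|q]; first by rewrite mul0n take0.
rewrite take_cat HB mulSn ltnNge leq_addr /= -IH //; congr (_ ++ take _ _).
by rewrite addKn.
Qed.

Lemma size_flatten_m m (bl : seq (seq nat)) : all (fun B => size B == m) bl ->
  size (flatten bl) = size bl * m.
Proof.
elim: bl => //= B bl IH /andP[/eqP HB Hbl]; by rewrite size_cat HB IH.
Qed.

Lemma wrefl_flatten (bl : seq (seq nat)) :
  wrefl M (flatten bl) = flatten (map (wrefl M) bl).
Proof. by elim: bl => //= B bl IH; rewrite wrefl_cat IH. Qed.

Hypothesis Ha0 : 0 < size a.
Hypothesis HaM : bnd M a.
Hypothesis HapM : bnd M (wplus a).

Lemma size_blk p x : size (blk p x) = size a.
Proof.
rewrite /blk; case: (p == 0); case: (x == 0); rewrite ?size_wrefl ?size_wplus //.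
Qed.

Lemma all_size_G p w : all (fun B => size B == size a) (G p w).
Proof. by elim: w p => //= x w IH p; rewrite size_blk eqxx IH. Qed.

Lemma bnd_blk p x : bnd M (blk p x).
Proof.
rewrite /blk; case: (p == 0); case: (x == 0) => //; exact: bnd_refl.
Qed.

Lemma bnd_G p w : bnd M (flatten (G p w)).
Proof. by elim: w p => //= x w IH p; rewrite bnd_cat bnd_blk IH. Qed.

Lemma blk_refl p x : p <= 1 -> x <= 1 -> wrefl M (blk p x) = blk (1 - p) (1 - x).
Proof.
rewrite /blk.
case: p => [|[|//]] _; case: x => [|[|//]] _ //=; by rewrite wreflK.
Qed.

Lemma G_refl p w : p <= 1 -> bnd 1 w ->
  map (wrefl M) (G p w) = G (1 - p) (wrefl 1 w).
Proof.
elim: w p => //= x w IH p Hp /andP[Hx Hw].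
rewrite blk_refl // IH //.
Qed.

Lemma G1_refl w : bnd 1 w ->
  flatten (G 1 w) = wrefl M (flatten (G 0 (wrefl 1 w))).
Proof.
move=> Hw; rewrite wrefl_flatten G_refl //; last exact: bnd_refl.
by rewrite wreflK.
Qed.

Hypothesis Hlt : llt a (wplus a).

Lemma blk_lt p : llt (blk p 0) (blk p 1).
Proof.
rewrite /blk; case: (p == 0) => //=; by rewrite llt_wrefl.
Qed.

Lemma G_mono p w w' : size w = size w' -> bnd 1 w -> bnd 1 w' -> llt w w' ->
  llt (flatten (G p w)) (flatten (G p w')).
Proof.
elim: w w' p => [|x w IH] [|x' w'] p //= [Hs] /andP[Hx Hw] /andP[Hx' Hw'].
case/orP=> [H|/andP[/eqP E H]].
- have [-> ->] : x = 0 /\ x' = 1 by case: x x' Hx Hx' H => [|[|]] [|[|]].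
  apply: llt_catl; first by rewrite !size_blk.
  exact: blk_lt.
- subst x'; rewrite llt_cat ?eqxx ?llt_irr //=; exact: IH.
Qed.

Lemma G_mono_le p w w' : size w = size w' -> bnd 1 w -> bnd 1 w' -> lle w w' ->
  lle (flatten (G p w)) (flatten (G p w')).
Proof.
move=> Hs Hw Hw'; case/orP=> [H|/eqP->]; last exact: lle_refl.
by apply: lltW; apply: G_mono.
Qed.

End G.

Lemma take_rcons_le (s : seq nat) l k : k <= size s -> take k (rcons s l) = take k s.
Proof.
move=> Hk; rewrite -cats1 take_cat; case: ltngtP Hk => // Hk _.
by rewrite Hk subnn take0 cats0 take_size.
Qed.

Lemma drop_wrefl M r z : drop r (wrefl M z) = wrefl M (drop r z).
Proof. by rewrite /wrefl map_drop. Qed.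
Lemma take_wrefl M r z : take r (wrefl M z) = wrefl M (take r z).
Proof. by rewrite /wrefl map_take. Qed.

Section Pieces.
Variables (M : nat) (a : seq nat).
Hypothesis Ha0 : 0 < size a.
Hypothesis HaM : bnd M a.
Hypothesis HapM : bnd M (wplus a).
Hypothesis HA1 : forall r, 0 < r < size a ->
  llt (drop r a) (take (size a - r) a) /\
  lle (wrefl M (take (size a - r) a)) (drop r a).

Lemma drop_wplus r : r < size a -> drop r (wplus a) = wplus (drop r a).
Proof.
case/lastP: a Ha0 => // a' l _; rewrite size_rcons ltnS => Hr.
by rewrite wplus_rcons !drop_rcons // wplus_rcons.
Qed.

Lemma take_wplus r : r < size a -> take r (wplus a) = take r a.
Proof.
case/lastP: a Ha0 => // a' l _; rewrite size_rcons ltnS => Hr.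
by rewrite wplus_rcons !take_rcons_le.
Qed.

Variable r : nat.
Hypothesis Hr : 0 < r < size a.

Let m := size a.
Let s := drop r a.
Let t := take (m - r) a.
Let s' := drop (m - r) a.
Let t' := take r a.

Lemma Hr' : 0 < m - r < size a.
Proof. case/andP: Hr => H1 H2; rewrite /m; apply/andP; split; lia. Qed.

Lemma st_lt : llt s t. Proof. by case: (HA1 Hr). Qed.
Lemma st_le : lle (wrefl M t) s. Proof. by case: (HA1 Hr). Qed.
Lemma st'_lt : llt s' t'.
Proof.
case: (HA1 Hr') => H _; move: H; rewrite /s' /t' /m.
by case/andP: Hr => H1 H2; rewrite subKn // ltnW.
Qed.
Lemma st'_le : lle (wrefl M t') s'.
Proof.
case: (HA1 Hr') => _; rewrite /s' /t' /m.
by case/andP: Hr => H1 H2; rewrite subKn // ltnW.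
Qed.

Lemma size_s : size s = m - r. Proof. by rewrite size_drop. Qed.
Lemma size_t : size t = m - r.
Proof. rewrite size_take /m; case/andP: Hr => H1 H2; case: ltnP => //; lia. Qed.
Lemma size_s' : size s' = r.
Proof. rewrite size_drop /m; case/andP: Hr => H1 H2; lia. Qed.
Lemma size_t' : size t' = r.
Proof. rewrite size_take /m; case/andP: Hr => H1 H2; by rewrite H2. Qed.

Lemma bs : bnd M s. Proof. exact: bnd_drop. Qed.
Lemma bt : bnd M t. Proof. exact: bnd_take. Qed.
Lemma bs' : bnd M s'. Proof. exact: bnd_drop. Qed.
Lemma bt' : bnd M t'. Proof. exact: bnd_take. Qed.
Lemma bps : bnd M (wplus s).
Proof. rewrite /s -drop_wplus; [exact: bnd_drop | by case/andP: Hr]. Qed.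
Lemma bps' : bnd M (wplus s').
Proof.
rewrite /s' -drop_wplus; [exact: bnd_drop | by case/andP: Hr'].
Qed.

Lemma s_pos : 0 < size s. Proof. rewrite size_s /m; case/andP: Hr => H1 H2; lia. Qed.
Lemma s'_pos : 0 < size s'. Proof. by rewrite size_s'; case/andP: Hr. Qed.

Lemma refl_s_le_t : lle (wrefl M s) t.
Proof. by rewrite -(wreflK bt) lle_wrefl ?bs ?bnd_refl ?st_le. Qed.
Lemma refl_s'_le_t' : lle (wrefl M s') t'.
Proof. by rewrite -(wreflK bt') lle_wrefl ?bs' ?bnd_refl ?st'_le. Qed.

Lemma drop_blk p x : p <= 1 -> x <= 1 ->
  drop r (blk M a p x) =
  if p == 0 then (if x == 0 then s else wplus s)
  else wrefl M (if x == 0 then wplus s else s).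
Proof.
have Hr2 : r < size a by case/andP: Hr.
rewrite /blk; case: (p == 0); case: (x == 0);
  rewrite ?drop_wrefl ?drop_wplus //.
Qed.

Lemma take_blk p y : take r (blk M a p y) = if p == 0 then t' else wrefl M t'.
Proof.
have Hr2 : r < size a by case/andP: Hr.
rewrite /blk; case: (p == 0); case: (y == 0);
  rewrite ?take_wrefl ?take_wplus //.
Qed.

Lemma U0 p : p <= 1 -> llt (drop r (blk M a p 0)) t.
Proof.
move=> Hp; rewrite drop_blk //; case: (p == 0); first exact: st_lt.
rewrite /=; apply: llt_lle_trans refl_s_le_t.
by rewrite llt_wrefl ?bs ?bps // llt_wplus // s_pos.
Qed.

Lemma U1 p : p <= 1 -> lle (drop r (blk M a p 1)) t.
Proof.
move=> Hp; rewrite drop_blk //; case: (p == 0) => /=.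
- by apply: lle_wplus; rewrite ?s_pos ?st_lt ?size_s ?size_t.
- exact: refl_s_le_t.
Qed.

Lemma L1 p : p <= 1 -> llt (wrefl M t) (drop r (blk M a p 1)).
Proof.
move=> Hp; rewrite drop_blk //; case: (p == 0) => /=.
- by apply: lle_llt_trans st_le _; rewrite llt_wplus // s_pos.
- by rewrite llt_wrefl ?bs ?bt ?st_lt.
Qed.

Lemma L0 p : p <= 1 -> lle (wrefl M t) (drop r (blk M a p 0)).
Proof.
move=> Hp; rewrite drop_blk //; case: (p == 0) => /=.
- exact: st_le.
- rewrite lle_wrefl ?bt ?bps //.
  by apply: lle_wplus; rewrite ?s_pos ?st_lt ?size_s ?size_t.
Qed.

Lemma U2 y : llt (take r (blk M a 1 y)) (wplus s').
Proof.
rewrite take_blk /=; apply: lle_llt_trans (st'_le) _.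
by rewrite llt_wplus // s'_pos.
Qed.

Lemma L2 y : llt (wrefl M (wplus s')) (take r (blk M a 0 y)).
Proof.
rewrite take_blk /=; apply: llt_lle_trans refl_s'_le_t'.
by rewrite llt_wrefl ?bs' ?bps' // llt_wplus // s'_pos.
Qed.

Lemma wplus_split : wplus a = t ++ wplus s'.
Proof.
have H : m - r < size a by case/andP: Hr'.
by rewrite -(cat_take_drop (m - r) (wplus a)) take_wplus // drop_wplus.
Qed.

End Pieces.

Lemma bit_nth b k : bnd 1 b -> nth 0 b k <= 1.
Proof.
move/allP=> H; case: (ltnP k (size b)) => Hk; first by apply: H; apply: mem_nth.
by rewrite nth_default.
Qed.

Lemma main_comp (M : nat) (a : seq nat) (b : seq nat)
 (Ha0 : 0 < size a) (HaM : bnd M a) (HapM : bnd M (wplus a))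
 (HA1 : forall r, 0 < r < size a ->
  llt (drop r a) (take (size a - r) a) /\
  lle (wrefl M (take (size a - r) a)) (drop r a))
 (HA2 : llt (wrefl M a) (wplus a))
 (HA3 : llt (wrefl M (wplus a)) a)
 (Hb1 : bnd 1 b) (Hn : 2 <= size b) (Hhd : head 0 b = 1)
 (Hlast : nth 0 b (size b).-1 = 0)
 (HB : forall q, 0 < q < size b ->
  llt (drop q b) (take (size b - q) b) /\
  lle (wrefl 1 (take (size b - q) b)) (drop q b)) :
  fundamental M (flatten (G M a 0 b)).
Proof.
have Hlt : llt a (wplus a) := llt_wplus Ha0.
have Hall := all_size_G M Ha0.
set m := size a in Ha0 HA1 Hall *.
set n := size b in Hn Hlast HB *.
set c := flatten (G M a 0 b).
have Hsz : size c = n * m by rewrite /c (size_flatten_m (Hall 0 b)) size_G.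
split; first by apply: bnd_G.
left; split.
  by rewrite Hsz; apply: leq_trans Hn _; apply: leq_pmulr.
move=> i /andP[Hi1 Hi2]; rewrite Hsz in Hi2 *.
have Hs1 : size (drop i c) = n * m - i by rewrite size_drop Hsz.
have Hs2 : size (take (n * m - i) c) = n * m - i.
  by rewrite size_takel // Hsz leq_subr.
have Hs3 : size (wrefl M (take (n * m - i) c)) = n * m - i by rewrite size_wrefl.
suff [H1 H2] : lle (wrefl M (take (n * m - i) c)) (drop i c) /\
               llt (drop i c) (take (n * m - i) c).
  by split; [apply/wle_lle => //; rewrite Hs3 Hs1 | apply/wlt_llt => //; rewrite Hs1].
have Eb : b = 1 :: behead b by move: Hhd Hn; rewrite /n; case: (b) => //= x b' ->.
set q := i %/ m; set r := i %% m.
have Hi : i = q * m + r by rewrite /q /r -divn_eq.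
have Hq : q < n by rewrite /q ltn_divLR.
set p := if q is q'.+1 then nth 0 b q' else 0.
have Hp : p <= 1 by rewrite /p; case: (q) => // q'; apply: bit_nth.
have Hdrop : drop i c = drop r (flatten (G M a p (drop q b))).
  by rewrite Hi addnC -drop_drop /c drop_flatten // G_drop // ltnW.
rewrite (drop_nth 0 Hq) /= in Hdrop.
set x := nth 0 b q in Hdrop; set w := drop q.+1 b in Hdrop.
have Hx : x <= 1 by apply: bit_nth.
have Ec : c = wplus a ++ flatten (G M a 1 (behead b)) by rewrite /c {1}Eb.
rewrite Hdrop; clear Hdrop.
case: (posnP r) => Hr0.
-
  rewrite Hr0 drop0; rewrite Hr0 addn0 in Hi.
  have Hq0 : 0 < q by case: (q) Hi Hi1 => // -> ; rewrite mul0n.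
  have Et : take (n * m - i) c = flatten (G M a 0 (take (n - q) b)).
    by rewrite Hi -mulnBl /c take_flatten // G_take.
  rewrite Et; clear Et.
  have [HBu HBl] : _ /\ _ := HB q (introT andP (conj Hq0 Hq)).
  rewrite (drop_nth 0 Hq) -/x -/w in HBu HBl.
  have Hsu : size (x :: w) = size (take (n - q) b).
    by rewrite /w /= size_drop size_takel ?leq_subr //; lia.
  have Hbu : bnd 1 (take (n - q) b) by apply: bnd_take.
  have Hbw : bnd 1 (x :: w) by rewrite /= Hx /w bnd_drop.
  have Eu : take (n - q) b = 1 :: take (n - q).-1 (behead b).
    by rewrite {1}Eb; case E: (n - q) => [|k] /=; [lia|].
  have [-> | ->] : p = 0 \/ p = 1 by case: (p) Hp => [|[|]] //= _; auto.
  + split; last first.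
      change (llt (flatten (G M a 0 (x :: w))) (flatten (G M a 0 (take (n - q) b)))).
      by apply: G_mono.
    rewrite Eu /= wrefl_cat /=; apply: lltW; apply: llt_catl.
      by rewrite size_wrefl size_wplus // size_blk.
    rewrite /blk /=; case: (x == 0) => //; exact: llt_trans HA3 Hlt.
  + split.
    * change (lle (wrefl M (flatten (G M a 0 (take (n - q) b)))) (flatten (G M a 1 (x :: w)))).
      rewrite (G1_refl HaM HapM) // lle_wrefl ?bnd_G //.
      apply: G_mono_le => //; rewrite ?size_wrefl ?bnd_refl //.
      by rewrite -(wreflK Hbu) lle_wrefl ?bnd_refl.
    * rewrite Eu /=; apply: llt_catl; first by rewrite size_wplus // size_blk.
      rewrite /blk /=; case: (x == 0) => //.
      by apply: llt_trans HA2; rewrite llt_wrefl.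
-
  have Hrm : r < m by rewrite /r ltn_mod.
  have Hr : 0 < r < size a by rewrite Hr0 Hrm.
  rewrite drop_cat size_blk // Hrm.
  case Ew: w => [|y w'].
  + have Hqn : q.+1 = n.
      by move: Ew; rewrite /w => /eqP; rewrite -size_eq0 size_drop -/n => /eqP; lia.
    have Hx0 : x = 0 by rewrite /x; move: Hlast; rewrite -Hqn.
    have Ek : n * m - i = m - r by rewrite Hi -Hqn mulSn; lia.
    rewrite Ek Ec take_cat size_wplus // ltn_subrL Ha0 Hr0 take_wplus ?ltn_subrL ?Ha0 ?Hr0 //.
    rewrite /= cats0 Hx0; split.
    * exact: (L0 Ha0 HaM HapM HA1 Hr Hp).
    * exact: (U0 Ha0 HaM HapM HA1 Hr Hp).
  + have Hqn : q.+2 <= n.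
      move: Ew; rewrite /w => /(congr1 size); rewrite size_drop /=; lia.
    have Ek : n * m - i = m + ((n - q.+1) * m - r).
      rewrite Hi; have -> : n = (n - q.+1) + q.+1 by lia.
      rewrite mulnDl mulSn; have : m <= (n - q.+1) * m by apply: leq_pmull; lia.
      lia.
    rewrite Ek Ec take_cat size_wplus // ltnNge leq_addr /= addKn.
    rewrite (wplus_split Ha0 HaM HapM Hr) -catA /=.
    rewrite -(cat_take_drop r (blk M a x y)) -catA.
    have HsD : forall x', size (drop r (blk M a p x')) = size (take (size a - r) a).
      by move=> x'; rewrite size_drop size_blk // (size_t Ha0 HaM HapM Hr).
    have [-> | ->] : x = 0 \/ x = 1 by case: (x) Hx => [|[|]] //= _; auto.
    * split.
      -- rewrite !wrefl_cat; apply: lle_cat2; first by rewrite size_wrefl HsD.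
           exact: (L0 Ha0 HaM HapM HA1 Hr Hp).
         move=> _; apply: lltW; apply: llt_catl.
           have Hs' := size_s' Ha0 HaM HapM Hr.
           by rewrite size_wrefl size_wplus Hs' ?size_takel ?size_blk ?Hs' // ltnW.
         exact: (L2 Ha0 HaM HapM HA1 Hr).
      -- apply: llt_cat2 => //; first exact/lltW/(U0 Ha0 HaM HapM HA1 Hr Hp).
         move=> E; have := U0 Ha0 HaM HapM HA1 Hr Hp; by rewrite E llt_irr.
    * split.
      -- rewrite !wrefl_cat; apply: lle_cat2; first by rewrite size_wrefl HsD.
           exact/lltW/(L1 Ha0 HaM HapM HA1 Hr Hp).
         move=> E; have := L1 Ha0 HaM HapM HA1 Hr Hp; by rewrite E llt_irr.
      -- apply: llt_cat2 => //; first exact: (U1 Ha0 HaM HapM HA1 Hr Hp).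
         move=> _; apply: llt_catl.
           have Hs' := size_s' Ha0 HaM HapM Hr.
           by rewrite size_wplus Hs' ?size_takel ?size_blk ?Hs' // ltnW.
         exact: (U2 Ha0 HaM HapM HA1 Hr).
Qed.


Lemma wplus_cons x s : 0 < size s -> wplus (x :: s) = x :: wplus s.
Proof.
case/lastP: s => // s l _.
by rewrite -rcons_cons !wplus_rcons.
Qed.

Lemma fund_conv N (a : seq nat) :
  (forall i, 1 <= i < size a ->
     wle (wrefl N (take (size a - i) a)) (drop i a) /\
     wlt (drop i a) (take (size a - i) a)) ->
  forall r, 0 < r < size a ->
  llt (drop r a) (take (size a - r) a) /\
  lle (wrefl N (take (size a - r) a)) (drop r a).
Proof.
move=> H r Hr; have [H1 H2] := H r Hr.
have Hs1 : size (take (size a - r) a) = size a - r by rewrite size_takel // leq_subr.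
have Hs2 : size (drop r a) = size a - r by rewrite size_drop.
split.
- by apply/wlt_llt => //; rewrite Hs1 Hs2.
- by apply/wle_lle => //; rewrite size_wrefl Hs1 Hs2.
Qed.

Unset Implicit Arguments.
Theorem lemma2p9 (M : nat) (a b : seq nat) :
  1 <= M -> fundamental M a -> fundamental 1 b -> fundamental M (wcomp M a b).
Proof.
move=> HM [HaM Ha] [Hb1 [[Hn HBw] | [_ [H2 _]]]]; last by [].
have HB := fund_conv HBw.
have [Hhd Hlast] : head 0 b = 1 /\ nth 0 b (size b).-1 = 0.
  have Hr : 0 < (size b).-1 < size b by apply/andP; split; lia.
  have [H _] := HB _ Hr.
  have Hsub : size b - (size b).-1 = 1 by lia.
  rewrite Hsub (drop_nth 0) ?drop_oversize in H; try lia.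
  move: H Hb1 Hn; case: (b) => [|x b'] //= H Hb1 _.
  rewrite andbF orbF in H.
  have Hy := @bit_nth (x :: b') (size b') Hb1.
  case/andP: Hb1 => Hx _.
  split; lia.
rewrite wcomp_G //.
have Ha0 : 0 < size a by case: Ha => [[H _]|[-> _]]; lia.
have [x [a' Ea]] : exists x a', a = x :: a' by case: (a) Ha0 => // x a' _; exists x, a'.
have HxM : x <= M by move: HaM; rewrite Ea => /andP[].
case: Ha => [[Hm HAw] | [Hm [HM2 /andP[Hx1 Hx2]]]].
- have HA1 := fund_conv HAw.
  have Hr : 0 < (size a).-1 < size a by apply/andP; split; lia.
  have [H1 H2] := HA1 _ Hr.
  have Hsub : size a - (size a).-1 = 1 by lia.
  have HlastA : nth 0 a (size a).-1 < x /\ M - x <= nth 0 a (size a).-1.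
    rewrite Hsub (drop_nth 0) ?drop_oversize in H1 H2; try lia.
    have Et : take 1 a = [:: x] by rewrite Ea /= take0.
    rewrite Et /lle /= andbF orbF in H1 H2.
    rewrite eqseq_cons andbT in H2.
    split => //; case/orP: H2 => [|/eqP ->] //; lia.
  have Ha'0 : 0 < size a' by move: Hm; rewrite Ea /=; lia.
  have HapM : bnd M (wplus a).
    move: HaM HlastA; rewrite nth_last; case/lastP: (a) => [|s l].
      by move=> *; rewrite /wplus /bnd /= HM.
    rewrite wplus_rcons /bnd !all_rcons last_rcons => /andP[_ ->] [H _].
    by rewrite andbT; lia.
  apply: main_comp => //.
  + rewrite Ea wplus_cons //= ; apply/orP; left; lia.
  + rewrite Ea wplus_cons //= ; apply/orP; left; lia.
- have Ea' : a' = [::] by move: Hm; rewrite Ea; case: (a').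
  rewrite Ea Ea' /= in Hx1 Hx2 *.
  apply: main_comp => //=; rewrite /bnd /=.
  + by rewrite andbT.
  + by rewrite Hx2.
  + by move=> r /andP[]; lia.
  + by rewrite /wplus /=; apply/orP; left; lia.
  + by rewrite /wplus /=; apply/orP; left; lia.
Qed.
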